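(* Let $n$ be odd. Let $\theta\sim\mathsf{Bernoulli}(p)$ with $p\in[\frac12,1)$ and, conditionally on $\theta$, let $Y_1,\dots,Y_n$ be i.i.d. with $\Pr(Y_k=1|\theta=1)=\bar\alpha$ and $\Pr(Y_k=1|\theta=0)=\alpha$, where $\alpha\in(0,\frac12)$, $\bar\alpha\bar p>\alpha p$, and $p<\mathsf{P}_{\mathsf{c}}(\theta|Y^n)$. Let $$\zeta_n(\varepsilon)=\frac{\mathsf{P}_{\mathsf{c}}(\theta|Y^n)-\varepsilon^n}{p\bar\alpha^n-\bar p\alpha^n}.$$ Then there exists $\varepsilon_{\mathsf L}<\mathsf{P}_{\mathsf{c}}^{1/n}(\theta|Y^n)$ such that for every $\varepsilon\in[\varepsilon_{\mathsf L},\mathsf{P}_{\mathsf{c}}^{1/n}(\theta|Y^n)]$, $$\max_{P_{Z^n|Y^n}:\ \mathcal{Z}^n=\{0,1\}^n,\ \mathsf{P}_{\mathsf{c}}(\theta|Z^n)\le\varepsilon^n}\mathsf{P}_{\mathsf{c}}(Y^n|Z^n)=1-\zeta_n(\varepsilon)\,(p\bar\alpha^n+\bar p\alpha^n),$$ and the $2^n$-ary Z-channel $\mathsf{Z}_n(\zeta_n(\varepsilon))$ attains this maximum on this interval.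
   Context: $\bar a=1-a$. $\mathsf{P}_{\mathsf{c}}(\theta|Z^n)=\sum_{z^n}\max_{t}P_{\theta Z^n}(t,z^n)$, and similarly for $\mathsf{P}_{\mathsf{c}}(Y^n|Z^n)$, $\mathsf{P}_{\mathsf{c}}(\theta|Y^n)$. The maximum is over channels $P_{Z^n|Y^n}$ with output alphabet $\{0,1\}^n$ acting on $Y^n$ only (so $\theta - Y^n - Z^n$ is a Markov chain). The $2^n$-ary Z-channel $\mathsf{Z}_n(\gamma)$ on $\{0,1\}^n$ is given by $\mathsf{W}(y|y)=1$ for $y\ne\mathbf 1$, $\mathsf{W}(\mathbf 0|\mathbf 1)=\gamma$, $\mathsf{W}(\mathbf 1|\mathbf 1)=1-\gamma$, with $\mathbf 0=(0,\dots,0)$, $\mathbf 1=(1,\dots,1)$. *)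

(* Defs.v *)
From HB Require Import structures.
From mathcomp Require Import all_boot all_order all_algebra.
From mathcomp Require Import all_classical all_reals.
From mathcomp Require Import exp.
Set Implicit Arguments. Unset Strict Implicit. Unset Printing Implicit Defensive.
Import Order.TTheory GRing.Theory Num.Theory.
Local Open Scope ring_scope.

Section Defs.
Variable R : realType.
Variable n : nat.

Definition word := {ffun 'I_n -> bool}.
Definition zeros : word := [ffun => false].
Definition ones : word := [ffun => true].

Definition channel := word -> word -> R.
Definition is_channel (K : channel) : Prop :=
  (forall y z, 0 <= K y z) /\ (forall y, \sum_(z : word) K y z = 1).

Definition bern (b : bool) (q : R) : R := if b then q else 1 - q.

Variables (p alpha : R).

Definition P_thY (t : bool) (y : word) : R :=
  bern t p * \prod_(k < n) bern (y k) (if t then 1 - alpha else alpha).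

Definition P_Y (y : word) : R := \sum_(t : bool) P_thY t y.

Definition P_thZ (K : channel) (t : bool) (z : word) : R :=
  \sum_(y : word) P_thY t y * K y z.

Definition P_YZ (K : channel) (y z : word) : R := P_Y y * K y z.

Definition Pc_thY : R := \sum_(y : word) \big[Num.max/0]_(t : bool) P_thY t y.
Definition Pc_thZ (K : channel) : R :=
  \sum_(z : word) \big[Num.max/0]_(t : bool) P_thZ K t z.
Definition Pc_YZ (K : channel) : R :=
  \sum_(z : word) \big[Num.max/0]_(y : word) P_YZ K y z.

Definition zeta (eps : R) : R :=
  (Pc_thY - eps ^+ n) / (p * (1 - alpha) ^+ n - (1 - p) * alpha ^+ n).

End Defs.

Definition Zchan (R : realType) (n : nat) (gamma : R) : channel R n :=
  fun y z =>
    if y != ones n then (if z == y then 1 else 0)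
    else if z == zeros n then gamma
    else if z == ones n then 1 - gamma
    else 0.

(* Main.v *)
Require Import Defs.
From HB Require Import structures.
From mathcomp Require Import all_boot all_order all_algebra.
From mathcomp Require Import all_classical all_reals.
From mathcomp Require Import exp.
From mathcomp Require Import ring lra.
Import Order.TTheory GRing.Theory Num.Theory.
Local Open Scope ring_scope.

Lemma bern_ge0 (R : realType) b (q : R) : 0 <= q -> q <= 1 -> 0 <= bern b q.
Proof. by case: b => /= ? ?; lra. Qed.

Lemma sum_prod_bern (R : realType) n (q : R) :
  \sum_(y : word n) \prod_(k < n) bern (y k) q = 1.
Proof.
rewrite /word -(bigA_distr_bigA (fun (k : 'I_n) (b : bool) => bern b q)) /=.
apply: big1 => k _; rewrite big_bool /=; lra.
Qed.

Lemma sum_PY (R : realType) n (p alpha : R) : \sum_(y : word n) @P_Y R n p alpha y = 1.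
Proof.
rewrite /P_Y exchange_big /= big_bool /= /P_thY -!big_distrr /= !sum_prod_bern /=; lra.
Qed.

Lemma le_max2 (R : realType) (F : bool -> R) t : F t <= \big[Num.max/0]_(t : bool) F t.
Proof. exact: le_bigmax. Qed.

Lemma max2_le (R : realType) (F : bool -> R) b : F true <= b -> F false <= b -> 0 <= b ->
  \big[Num.max/0]_(t : bool) F t <= b.
Proof. move=> h1 h2 h0; apply: bigmax_le => // -[] _ //. Qed.

Lemma max2E (R : realType) (F : bool -> R) : 0 <= F false ->
  \big[Num.max/0]_(t : bool) F t = Num.max (F true) (F false).
Proof.
move=> h; apply/le_anti/andP; split.
  by apply: max2_le; rewrite ?le_max ?lexx ?orbT // h orbT.
by rewrite ge_max !le_max2.
Qed.

Lemma max2E' (R : realType) (F : bool -> R) : 0 <= F false ->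
  \big[Num.max/0]_(t : bool) F t = if F true <= F false then F false else F true.
Proof. by move=> h; rewrite max2E // maxEle. Qed.

Lemma prod_pow (R : realType) n (q a : R) (y : word n) :
  a ^+ n * \prod_(k < n) bern (y k) q = \prod_(k < n) (a * bern (y k) q).
Proof. by rewrite big_split /= prodr_const card_ord. Qed.

Lemma eqmax (R : realType) n (F : word n -> R) : (forall y, 0 <= F y) ->
  exists ys, \big[Num.max/0]_(y : word n) F y = F ys.
Proof.
move=> h; have [ys _ ->] := @eq_bigmax _ _ _ 0 (zeros n) xpredT F isT (fun y _ => h y).
by exists ys.
Qed.

Lemma bias1 (R : realType) n (p alpha : R) (y : word n) :
  0 < alpha -> alpha < 2^-1 -> 2^-1 <= p -> p < 1 ->
  ((1-p) * alpha ^+ n) * P_thY p alpha true y <= (p * (1-alpha) ^+ n) * P_thY p alpha false y.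
Proof.
move=> ha0 ha hp hp1; rewrite /P_thY /=.
set P1 := \prod_(k < n) _. set P0 := \prod_(k < n) _.
have -> : (1 - p) * alpha ^+ n * (p * P1) = (p * (1 - p)) * (alpha ^+ n * P1) by ring.
have -> : p * (1 - alpha) ^+ n * ((1 - p) * P0) = (p * (1 - p)) * ((1 - alpha) ^+ n * P0) by ring.
rewrite /P1 /P0 !prod_pow; apply: ler_wpM2l; first nra.
apply: ler_prod => k _; case: (y k) => /=; apply/andP; split; nra.
Qed.

Lemma bias2 (R : realType) n (p alpha : R) (y : word n) :
  0 < alpha -> alpha < 2^-1 -> 2^-1 <= p -> p < 1 ->
  ((1-p) * alpha ^+ n) * P_thY p alpha false y <= (p * (1-alpha) ^+ n) * P_thY p alpha true y.
Proof.
move=> ha0 ha hp hp1; rewrite /P_thY /=.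
set P1 := \prod_(k < n) _. set P0 := \prod_(k < n) _.
have -> : (1 - p) * alpha ^+ n * ((1 - p) * P1) = ((1 - p) * (1 - p)) * (alpha ^+ n * P1) by ring.
have -> : p * (1 - alpha) ^+ n * (p * P0) = (p * p) * ((1 - alpha) ^+ n * P0) by ring.
rewrite /P1 /P0 !prod_pow; apply: ler_pM; first nra.
- by apply: prodr_ge0 => k _; case: (y k) => /=; nra.
- nra.
apply: ler_prod => k _; case: (y k) => /=; apply/andP; split; nra.
Qed.

Lemma PthY_ge0 (R : realType) n (p alpha : R) t (y : word n) :
  0 < alpha -> alpha < 2^-1 -> 2^-1 <= p -> p < 1 -> 0 <= P_thY p alpha t y.
Proof.
move=> ha0 ha hp hp1; rewrite /P_thY; apply: mulr_ge0.
  by case: t => /=; lra.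
by apply: prodr_ge0 => k _; case: t; case: (y k) => /=; lra.
Qed.

Lemma pery (R : realType) n (p alpha : R) t (y : word n) :
  0 < alpha -> alpha < 2^-1 -> 2^-1 <= p -> p < 1 ->
  (p * (1-alpha) ^+ n + (1-p) * alpha ^+ n) *
    (\big[Num.max/0]_(s : bool) P_thY p alpha s y - P_thY p alpha t y)
  <= (p * (1-alpha) ^+ n - (1-p) * alpha ^+ n) * P_Y p alpha y.
Proof.
move=> ha0 ha hp hp1.
have b1 := @bias1 _ _ p alpha y ha0 ha hp hp1; have b2 := @bias2 _ _ p alpha y ha0 ha hp hp1.
have g1 := @PthY_ge0 _ _ p alpha true y ha0 ha hp hp1; have g0 := @PthY_ge0 _ _ p alpha false y ha0 ha hp hp1.
rewrite max2E' // /P_Y big_bool /=.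
have gA : 0 <= p * (1-alpha) ^+ n by apply: mulr_ge0; [lra| apply: exprn_ge0; lra].
have gB : 0 <= (1-p) * alpha ^+ n by apply: mulr_ge0; [lra| apply: exprn_ge0; lra].
have hAB : (1-p) * alpha ^+ n <= p * (1-alpha) ^+ n.
  apply: ler_pM; try lra; first by apply: exprn_ge0; lra.
  by apply: lerXn2r; rewrite ?nnegrE; lra.
case: t; move: b1 b2 g1 g0 gA gB hAB.
all: generalize (P_thY p alpha true y) (P_thY p alpha false y) (p * (1-alpha) ^+ n) ((1-p) * alpha ^+ n).
all: move=> P1 P0 A B b1 b2 g1 g0 gA gB hAB.
all: case: ifP => h; [move/idP: h => h | move/negbT: h; rewrite -ltNge => h]; nra.
Qed.

Lemma PY_ge0 (R : realType) n (p alpha : R) (y : word n) :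
  0 < alpha -> alpha < 2^-1 -> 2^-1 <= p -> p < 1 -> 0 <= P_Y p alpha y.
Proof.
move=> ha0 ha hp hp1; rewrite /P_Y; apply: sumr_ge0 => t _; exact: PthY_ge0.
Qed.

Lemma perz (R : realType) n (p alpha : R) (a : word n -> R) :
  0 < alpha -> alpha < 2^-1 -> 2^-1 <= p -> p < 1 -> (forall y, 0 <= a y) ->
  (p * (1-alpha) ^+ n + (1-p) * alpha ^+ n) *
    (\sum_(y : word n) (\big[Num.max/0]_(s : bool) P_thY p alpha s y) * a y
     - \big[Num.max/0]_(t : bool) (\sum_(y : word n) P_thY p alpha t y * a y))
  <= (p * (1-alpha) ^+ n - (1-p) * alpha ^+ n) *
    (\sum_(y : word n) P_Y p alpha y * a y
     - \big[Num.max/0]_(y : word n) (P_Y p alpha y * a y)).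
Proof.
move=> ha0 ha hp hp1 hpos.
have gA : 0 <= p * (1-alpha) ^+ n by apply: mulr_ge0; [lra| apply: exprn_ge0; lra].
have gB : 0 <= (1-p) * alpha ^+ n by apply: mulr_ge0; [lra| apply: exprn_ge0; lra].
have [ys ->] := @eqmax _ _ (fun y => P_Y p alpha y * a y)
   (fun y => mulr_ge0 (@PY_ge0 _ _ p alpha y ha0 ha hp hp1) (hpos y)).
pose ts := ~~ (P_thY p alpha true ys <= P_thY p alpha false ys).
have mts : \big[Num.max/0]_(s : bool) P_thY p alpha s ys = P_thY p alpha ts ys.
  by rewrite max2E' ?PthY_ge0 // /ts; case: ifP.
apply: (@le_trans _ _ ((p * (1-alpha) ^+ n + (1-p) * alpha ^+ n) *
    (\sum_(y : word n) (\big[Num.max/0]_(s : bool) P_thY p alpha s y) * a y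
     - \sum_(y : word n) P_thY p alpha ts y * a y))).
  apply: ler_wpM2l; first lra.
  apply: lerB => //; exact: (@le_max2 _ (fun t => \sum_(y : word n) P_thY p alpha t y * a y) ts).
rewrite -sumrB mulr_sumr (bigD1 ys) //= mts subrr mulr0 add0r.
rewrite [X in _ <= _ * (X - _)](bigD1 ys) //= addrAC subrr add0r mulr_sumr.
apply: ler_sum => y _.
rewrite -mulrBl mulrA [X in _ <= X]mulrA; apply: ler_wpM2r => //.
exact: pery.
Qed.

Lemma conv (R : realType) n (p alpha : R) (K : channel R n) :
  0 < alpha -> alpha < 2^-1 -> 2^-1 <= p -> p < 1 -> is_channel K ->
  (p * (1-alpha) ^+ n + (1-p) * alpha ^+ n) * (Pc_thY n p alpha - Pc_thZ p alpha K)
  <= (p * (1-alpha) ^+ n - (1-p) * alpha ^+ n) * (1 - Pc_YZ p alpha K).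
Proof.
move=> ha0 ha hp hp1 [hK0 hK1].
have e1 : Pc_thY n p alpha - Pc_thZ p alpha K =
  \sum_(z : word n) (\sum_(y : word n) (\big[Num.max/0]_(s : bool) P_thY p alpha s y) * K y z
     - \big[Num.max/0]_(t : bool) (\sum_(y : word n) P_thY p alpha t y * K y z)).
  rewrite sumrB /Pc_thZ /P_thZ; congr (_ - _).
  rewrite /Pc_thY exchange_big /=; apply: eq_bigr => y _.
  by rewrite -mulr_sumr hK1 mulr1.
have e2 : 1 - Pc_YZ p alpha K =
  \sum_(z : word n) (\sum_(y : word n) P_Y p alpha y * K y z
     - \big[Num.max/0]_(y : word n) (P_Y p alpha y * K y z)).
  rewrite sumrB /Pc_YZ /P_YZ; congr (_ - _).
  rewrite -(@sum_PY R n p alpha) [RHS]exchange_big /=; apply: eq_bigr => y _.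
  by rewrite -mulr_sumr hK1 mulr1.
rewrite e1 e2 !mulr_sumr; apply: ler_sum => z _.
by apply: perz => // y; apply: hK0.
Qed.

Lemma zo n : (0 < n)%N -> (zeros n == ones n) = false.
Proof. by move=> h; apply/eqP => /ffunP/(_ (Ordinal h)); rewrite !ffunE. Qed.

Lemma Zsum (R : realType) n (g : R) (F : word n -> R) z : (0 < n)%N ->
  \sum_(y : word n) F y * Zchan g y z =
  (if z != ones n then F z else 0) + (if z == zeros n then g * F (ones n) else 0)
  + (if z == ones n then (1 - g) * F (ones n) else 0).
Proof.
move=> hn.
have hZo : Zchan g (ones n) z = (if z == zeros n then g else if z == ones n then 1 - g else 0).
  by rewrite /Zchan eqxx.
rewrite (bigD1 (ones n)) //= hZo.
have -> : \sum_(y : word n | y != ones n) F y * Zchan g y z =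
          (if z != ones n then F z else 0).
  case: (eqVneq z (ones n)) => hz /=.
    apply: big1 => y hy; rewrite /Zchan hy hz.
    by rewrite eq_sym (negbTE hy) mulr0.
  have hZz : Zchan g z z = 1 by rewrite /Zchan hz eqxx.
  rewrite (bigD1 z) //= hZz mulr1 big1 ?addr0 // => y /andP[hy hyz].
  by rewrite /Zchan hy eq_sym (negbTE hyz) mulr0.
case: (eqVneq z (ones n)) => hz.
  by rewrite hz eq_sym zo // /=; ring.
rewrite /=; case: (z == zeros n); ring.
Qed.

Lemma split3 (R : realType) n (G : word n -> R) : (0 < n)%N ->
  \sum_(z : word n) G z = G (ones n) + G (zeros n) +
    \sum_(z : word n | (z != ones n) && (z != zeros n)) G z.
Proof.
move=> hn; rewrite (bigD1 (ones n)) //= (bigD1 (zeros n)) /=; last by rewrite zo.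
by rewrite addrA.
Qed.

Lemma PthY_ones (R : realType) n (p alpha : R) t :
  P_thY p alpha t (ones n) = bern t p * (if t then 1 - alpha else alpha) ^+ n.
Proof.
rewrite /P_thY; congr (_ * _).
under eq_bigr do rewrite ffunE /=.
by rewrite prodr_const card_ord.
Qed.

Lemma PthY_zeros (R : realType) n (p alpha : R) t :
  P_thY p alpha t (zeros n) = bern t p * (1 - (if t then 1 - alpha else alpha)) ^+ n.
Proof.
rewrite /P_thY; congr (_ * _).
under eq_bigr do rewrite ffunE /=.
by rewrite prodr_const card_ord.
Qed.

Lemma PthZ_Z (R : realType) n (p alpha g : R) t z : (0 < n)%N ->
  P_thZ p alpha (@Zchan R n g) t z =
  (if z != ones n then P_thY p alpha t z else 0)
  + (if z == zeros n then g * P_thY p alpha t (ones n) else 0)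
  + (if z == ones n then (1 - g) * P_thY p alpha t (ones n) else 0).
Proof. move=> hn; exact: Zsum. Qed.

Lemma achZ (R : realType) n (p alpha g : R) : (0 < n)%N ->
  0 < alpha -> alpha < 2^-1 -> 2^-1 <= p -> p < 1 -> 0 <= g -> g <= 1 ->
  p * alpha ^+ n + g * (p * (1-alpha) ^+ n) <= (1-p) * (1-alpha) ^+ n + g * ((1-p) * alpha ^+ n) ->
  Pc_thZ p alpha (@Zchan R n g) <= Pc_thY n p alpha - g * (p * (1-alpha) ^+ n - (1-p) * alpha ^+ n).
Proof.
move=> hn ha0 ha hp hp1 hg0 hg1 hcond.
rewrite /Pc_thZ /Pc_thY (split3 _ _ _ hn) [X in _ <= X - _](split3 _ _ _ hn).
have -> : \sum_(z : word n | (z != ones n) && (z != zeros n))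
     \big[Num.max/0]_(t : bool) P_thZ p alpha (Zchan g) t z =
   \sum_(z : word n | (z != ones n) && (z != zeros n))
     \big[Num.max/0]_(t : bool) P_thY p alpha t z.
  apply: eq_bigr => z /andP[h1 h2]; apply: eq_bigr => t _.
  by rewrite PthZ_Z // h1 (negbTE h2) (negbTE h1) !addr0.
have h1 : \big[Num.max/0]_(t : bool) P_thZ p alpha (Zchan g) t (ones n)
          <= (1 - g) * (p * (1-alpha) ^+ n).
  apply: max2_le; last first.
    apply: mulr_ge0; first lra. apply: mulr_ge0; [lra | apply: exprn_ge0; lra].
  1-2: rewrite /= PthZ_Z // eqxx eq_sym zo //= !PthY_ones /=.
  - have : (1-p) * alpha ^+ n <= p * (1-alpha) ^+ n.
      apply: ler_pM; try lra; first by apply: exprn_ge0; lra.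
      by apply: lerXn2r; rewrite ?nnegrE; lra.
    nra.
  - lra.
have h2 : \big[Num.max/0]_(t : bool) P_thZ p alpha (Zchan g) t (zeros n)
          <= (1-p) * (1-alpha) ^+ n + g * ((1-p) * alpha ^+ n).
  apply: max2_le; last first.
    have : 0 <= (1-p) * (1-alpha) ^+ n by apply: mulr_ge0; [lra | apply: exprn_ge0; lra].
    have : 0 <= (1-p) * alpha ^+ n by apply: mulr_ge0; [lra | apply: exprn_ge0; lra].
    nra.
  1-2: rewrite /= PthZ_Z // eqxx zo //= !PthY_ones !PthY_zeros /=.
  - lra.
  - have -> : 1 - (1 - alpha) = alpha by ring. lra.
have h3 : p * (1-alpha) ^+ n <= \big[Num.max/0]_(t : bool) P_thY p alpha t (ones n).
  by have := @le_max2 _ (fun t => P_thY p alpha t (ones n)) true; rewrite /= PthY_ones.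
have h4 : (1-p) * (1-alpha) ^+ n <= \big[Num.max/0]_(t : bool) P_thY p alpha t (zeros n).
  by have := @le_max2 _ (fun t => P_thY p alpha t (zeros n)) false; rewrite /= PthY_zeros.
move: h1 h2 h3 h4; set S := \sum_(z | _) _.
generalize (p * (1-alpha) ^+ n) ((1-p) * alpha ^+ n) ((1-p) * (1-alpha) ^+ n) => A B C.
move=> h1 h2 h3 h4; nra.
Qed.

Lemma Zchan_ch (R : realType) n (g : R) : (0 < n)%N -> 0 <= g -> g <= 1 ->
  is_channel (@Zchan R n g).
Proof.
move=> hn hg0 hg1; split.
  move=> y z; rewrite /Zchan.
  by repeat case: ifP => _; lra.
move=> y; case: (eqVneq y (ones n)) => hy.
  rewrite hy (split3 _ _ _ hn) big1.
    by rewrite /Zchan eqxx /= eq_sym zo //= eqxx; ring.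
  by move=> z /andP[h1 h2]; rewrite /Zchan eqxx /= (negbTE h1) (negbTE h2).
rewrite (bigD1 y) //= big1.
  by rewrite /Zchan hy eqxx addr0.
by move=> z hz; rewrite /Zchan hy (negbTE hz).
Qed.

Lemma le_bigmaxW (R : realType) n (F : word n -> R) y :
  F y <= \big[Num.max/0]_(y : word n) F y.
Proof. exact: le_bigmax. Qed.

Lemma PcYZ_ge (R : realType) n (p alpha g : R) : (0 < n)%N ->
  1 - g * (p * (1-alpha) ^+ n + (1-p) * alpha ^+ n) <= Pc_YZ p alpha (@Zchan R n g).
Proof.
move=> hn.
apply: (@le_trans _ _ (\sum_(z : word n) P_YZ p alpha (@Zchan R n g) z z)); last first.
  apply: ler_sum => z _.
  exact: (@le_bigmaxW R n (fun y => P_YZ p alpha (@Zchan R n g) y z) z).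
rewrite /P_YZ (bigD1 (ones n)) //=.
have -> : Zchan g (ones n) (ones n) = 1 - g by rewrite /Zchan eqxx /= eq_sym zo //= eqxx.
rewrite (eq_bigr (fun z => P_Y p alpha z)); last first.
  by move=> z hz; rewrite /Zchan hz eqxx mulr1.
have hs := @sum_PY R n p alpha; rewrite (bigD1 (ones n)) //= in hs.
have -> : P_Y p alpha (ones n) = p * (1-alpha) ^+ n + (1-p) * alpha ^+ n.
  by rewrite /P_Y big_bool /= !PthY_ones.
move: hs; rewrite /P_Y big_bool /= !PthY_ones /=.
move=> hs; nra.
Qed.

Lemma Gpos (R : realType) m (p alpha : R) :
  0 < alpha -> alpha < 2^-1 -> 2^-1 <= p -> p < 1 ->
  alpha * p < (1 - alpha) * (1 - p) ->
  p * alpha ^+ m.+1 < (1-p) * (1-alpha) ^+ m.+1.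
Proof.
move=> ha0 ha hp hp1 hap; rewrite !exprS.
have h1 : alpha ^+ m <= (1-alpha) ^+ m by apply: lerXn2r; rewrite ?nnegrE; lra.
have h2 : 0 < alpha ^+ m by apply: exprn_gt0.
have h3 : 0 <= (1-p) * (1-alpha) by apply: mulr_ge0; lra.
have h4 : 0 <= (1-p) * (1-alpha) * ((1-alpha) ^+ m - alpha ^+ m) by apply: mulr_ge0; lra.
have h5 : 0 < ((1-alpha) * (1-p) - alpha * p) * alpha ^+ m by apply: mulr_gt0; lra.
nra.
Qed.

Lemma rootK (R : realType) n (x : R) : (0 < n)%N -> 0 <= x -> (x `^ (n%:R)^-1) ^+ n = x.
Proof.
move=> hn hx; rewrite -powR_mulrn ?powR_ge0 // -powRrM mulVf ?powRr1 //.
by rewrite pnatr_eq0 -lt0n.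
Qed.

Theorem proposition3 (R : realType) (n : nat) (p alpha : R) :
  odd n ->
  2^-1 <= p -> p < 1 ->
  0 < alpha -> alpha < 2^-1 ->
  alpha * p < (1 - alpha) * (1 - p) ->
  p < Pc_thY n p alpha ->
  let r := Pc_thY n p alpha `^ (n%:R)^-1 in
  exists epsL : R, epsL < r /\
    forall eps : R, epsL <= eps -> eps <= r ->
      let v := 1 - zeta n p alpha eps *
                   (p * (1 - alpha) ^+ n + (1 - p) * alpha ^+ n) in
      [/\ @is_channel R n (@Zchan R n (zeta n p alpha eps)),
          @Pc_thZ R n p alpha (@Zchan R n (zeta n p alpha eps)) <= eps ^+ n,
          @Pc_YZ R n p alpha (@Zchan R n (zeta n p alpha eps)) = v &
          forall K : channel R n, @is_channel R n K ->
            @Pc_thZ R n p alpha K <= eps ^+ n -> @Pc_YZ R n p alpha K <= v].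
Proof.
move=> hodd hp hp1 ha0 ha hap hPc r.
have hn := odd_gt0 hodd.
have hG : p * alpha ^+ n < (1-p) * (1-alpha) ^+ n.
  by have := @Gpos R n.-1 p alpha ha0 ha hp hp1 hap; rewrite prednK.
have hBA : (1-p) * alpha ^+ n < p * (1-alpha) ^+ n.
  have : alpha ^+ n < (1-alpha) ^+ n by rewrite ltrXn2r -?lt0n //; lra.
  have : 0 < alpha ^+ n by apply: exprn_gt0.
  nra.
have hB0 : 0 <= (1-p) * alpha ^+ n by apply: mulr_ge0; [lra | apply: exprn_ge0; lra].
have hPc0 : 0 < Pc_thY n p alpha by lra.
have conv0 := @conv R n p alpha.
have achZ0 := @achZ R n p alpha.
have PcYZ0 := @PcYZ_ge R n p alpha.
rewrite /zeta.
move: hG hBA hB0 hPc0 hPc conv0 achZ0 PcYZ0; rewrite /r; clear r.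
generalize (Pc_thY n p alpha) => Pc.
generalize (p * (1-alpha) ^+ n) ((1-p) * alpha ^+ n) ((1-p) * (1-alpha) ^+ n) (p * alpha ^+ n).
move=> A B C D hG hBA hB0 hPc0 hPc conv0 achZ0 PcYZ0.
pose d := Num.min (C - D) (Num.min (A - B) (Pc / 2)).
have hd1 : d <= C - D by rewrite /d ge_min lexx.
have hd2 : d <= A - B by rewrite /d !ge_min lexx /= !orbT.
have hd3 : d <= Pc / 2 by rewrite /d !ge_min lexx !orbT.
have hd0 : 0 < d by rewrite /d !lt_min; apply/and3P; split; lra.
pose s := Pc - d.
have hs0 : 0 <= s by rewrite /s; lra.
exists (s `^ (n%:R)^-1); split.
  apply: gt0_ltr_powR; rewrite ?nnegrE ?invr_gt0 ?ltr0n //; rewrite /s; lra.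
move=> eps he1 he2.
have hL0 : 0 <= s `^ (n%:R)^-1 by apply: powR_ge0.
have he0 : 0 <= eps by apply: le_trans he1.
have hen : eps ^+ n <= Pc.
  rewrite -(@rootK R n Pc hn (ltW hPc0)); apply: (lerXn2r n) => //; rewrite nnegrE ?powR_ge0 //.
have hes : s <= eps ^+ n.
  rewrite -(@rootK R n s hn hs0); apply: (lerXn2r n) => //; rewrite nnegrE ?powR_ge0 //.
have hes' : Pc - d <= eps ^+ n := hes.
have hAB : A - B != 0 by rewrite subr_eq0 gt_eqF.
set g := (Pc - eps ^+ n) / (A - B).
have hg : g * (A - B) = Pc - eps ^+ n by rewrite /g divfK.
have hg0 : 0 <= g by rewrite /g divr_ge0 //; lra.
have hg1 : g <= 1 by rewrite /g ler_pdivrMr; lra.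
have hcond : D + g * A <= C + g * B.
  have : g * (A - B) <= C - D by rewrite hg; lra.
  lra.
have hZ : Pc_thZ p alpha (@Zchan R n g) <= eps ^+ n.
  by apply: le_trans (achZ0 g hn ha0 ha hp hp1 hg0 hg1 hcond) _; rewrite hg; lra.
have hconv : forall K : channel R n, is_channel K -> Pc_thZ p alpha K <= eps ^+ n ->
    Pc_YZ p alpha K <= 1 - g * (A + B).
  move=> K hK hKz; have hc := conv0 K ha0 ha hp hp1 hK.
  have h1 : (A - B) * (g * (A + B)) <= (A - B) * (1 - Pc_YZ p alpha K).
    have -> : (A - B) * (g * (A + B)) = (g * (A - B)) * (A + B) by ring.
    rewrite hg; have : 0 <= A + B by lra.
    nra.
  rewrite ler_pM2l in h1; lra.
have hch := @Zchan_ch R n g hn hg0 hg1.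
split => //.
apply/le_anti/andP; split; first exact: hconv.
exact: PcYZ0.
Qed.
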